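(* Let $\varrho$ be a density operator on a Hilbert space $\mathcal H_d$ of finite dimension $d$. Then $$\sup_{\xi}\|\varrho-\xi\|_{\mathrm{tr}}=2\big(1-b(\varrho)\big),$$ where the supremum is over all density operators $\xi$ on $\mathcal H_d$ and $\|A\|_{\mathrm{tr}}=\operatorname{tr}|A|$.
   Context: For the convex set $Z=\mathcal S(\mathcal H_d)$ of density operators and $x,y\in Z$, the weight function is $t_y(x)=\sup\{0\leq t<1 : \frac{y-tx}{1-t}\in Z\}$, and the boundariness of $y$ is $b(y)=\inf_{x\in Z}t_y(x)$. (For states, $b(\varrho)$ equals the smallest eigenvalue of $\varrho$.) *)

(* Defs.v *)
From HB Require Import structures.
From mathcomp Require Import all_boot all_order all_algebra.
From mathcomp Require Import sesquilinear spectral.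
From mathcomp Require Import complex.
From mathcomp Require Import boolp classical_sets reals.

Set Implicit Arguments.
Unset Strict Implicit.
Unset Printing Implicit Defensive.

Import Order.TTheory GRing.Theory Num.Theory.
Local Open Scope ring_scope.
Local Open Scope classical_set_scope.
Local Open Scope complex_scope.
Local Open Scope sesquilinear_scope.

Definition density (R : realType) (d : nat) (rho : 'M[R[i]]_d) : Prop :=
  rho \is hermsymmx /\
  (forall v : 'rV[R[i]]_d, 0 <= (v *m rho *m v ^t*) 0 0) /\
  \tr rho = 1.

Definition absmx (R : realType) (d : nat) (A : 'M[R[i]]_d) : 'M[R[i]]_d :=
  let M := A ^t* *m A in
  let P := spectralmx M in
  invmx P *m diag_mx (map_mx (fun z : R[i] => sqrtC z) (spectral_diag M)) *m P.

Definition trnorm (R : realType) (d : nat) (A : 'M[R[i]]_d) : R :=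
  complex.Re (\tr (absmx A)).

Definition weight (R : realType) (d : nat) (y x : 'M[R[i]]_d) : R :=
  sup [set t : R | 0 <= t < 1 /\ density ((1 - t%:C)^-1 *: (y - t%:C *: x))].

Definition boundariness (R : realType) (d : nat) (y : 'M[R[i]]_d) : R :=
  inf [set weight y x | x in [set x | density x]].

(* Main.v *)
Require Import Defs.
From HB Require Import structures.
From mathcomp Require Import all_boot all_order all_algebra.
From mathcomp Require Import sesquilinear spectral complex.
From mathcomp Require Import boolp classical_sets reals.
From mathcomp Require Import lra.
Set Implicit Arguments.
Unset Strict Implicit.
Unset Printing Implicit Defensive.
Import Order.TTheory GRing.Theory Num.Theory.
Local Open Scope ring_scope.
Local Open Scope sesquilinear_scope.

Lemma char_poly_sim (F : fieldType) n (P D : 'M[F]_n) : P \in unitmx ->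
  char_poly (invmx P *m D *m P) = char_poly D.
Proof.
move=> Pu; rewrite /char_poly /char_poly_mx.
have -> : 'X%:M - map_mx (@polyC F) (invmx P *m D *m P) = map_mx (@polyC F) (invmx P) *m ('X%:M - map_mx (@polyC F) D) *m map_mx (@polyC F) P.
  rewrite mulmxBr mulmxBl !map_mxM; congr (_ - _).
  by rewrite mul_mx_scalar -scalemxAl -map_mxM mulVmx // map_mx1 scalemx1.
rewrite !det_mulmx !det_map_mx mulrC mulrA -rmorphM -det_mulmx mulmxV //.
by rewrite det1 rmorph1 mul1r.
Qed.

Section S.
Variable R : realType.
Local Notation C := (R[i]).

Definition q n (v : 'rV[C]_n) (X : 'M[C]_n) := (v *m X *m v ^t*) 0 0.

Lemma rowq n (V X : 'M[C]_n) j : (V *m X *m V^t*) j j = q (row j V) X.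
Proof.
rewrite /q !mxE; apply: eq_bigr => k _; rewrite !mxE; congr (_ * _).
by apply: eq_bigr => l _; rewrite !mxE.
Qed.

Lemma unitary_tC n (V : 'M[C]_n) : V \is unitarymx -> V^t* *m V = 1%:M.
Proof. by move=> /unitarymxP/mulmx1C. Qed.

Lemma trace_unitary n (V X : 'M[C]_n) : V \is unitarymx ->
  \tr X = \sum_j q (row j V) X.
Proof.
move=> Vu; rewrite -[X in \tr X]mulmx1 -(unitary_tC Vu) mulmxA mxtrace_mulC mulmxA.
by rewrite /mxtrace; apply: eq_bigr => j _; rewrite rowq.
Qed.

Lemma conj_diag n (V : 'M[C]_n) l : V \is unitarymx ->
  V *m (V^t* *m diag_mx l *m V) *m V^t* = diag_mx l.
Proof.
move=> Vu; rewrite !mulmxA (unitarymxP Vu) mul1mx -mulmxA (unitarymxP Vu).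
by rewrite mulmx1.
Qed.

Lemma q_diag_row n (V : 'M[C]_n) l j : V \is unitarymx ->
  q (row j V) (V^t* *m diag_mx l *m V) = l 0 j.
Proof. by move=> Vu; rewrite -rowq conj_diag // mxE eqxx mulr1n. Qed.

Lemma q_diag n (U : 'M[C]_n) l v :
  q v (U^t* *m diag_mx l *m U) =
  \sum_i l 0 i * ((v *m U^t*) 0 i * ((v *m U^t*) 0 i)^* ).
Proof.
rewrite /q.
have -> : v *m (U^t* *m diag_mx l *m U) *m v^t* =
   (v *m U^t*) *m diag_mx l *m (v *m U^t*)^t*.
  by rewrite trmx_mul map_mxM trmxCK !mulmxA.
rewrite mul_mx_diag mxE; apply: eq_bigr => i _; rewrite !mxE.
by rewrite mulrAC mulrC.
Qed.

Lemma nv_unitary n (U : 'M[C]_n) v : U \is unitarymx ->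
  \sum_i ((v *m U^t*) 0 i * ((v *m U^t*) 0 i)^* ) = q v 1%:M.
Proof.
move=> Uu; have := q_diag U (const_mx 1) v.
rewrite diag_const_mx mul_mx_scalar scale1r (unitary_tC Uu) => ->.
by apply: eq_bigr => i _; rewrite !mxE mul1r.
Qed.


Lemma trace_sim n (P X : 'M[C]_n) : P \in unitmx -> \tr (invmx P *m X *m P) = \tr X.
Proof. by move=> Pu; rewrite mxtrace_mulC mulmxA mulmxV // mul1mx. Qed.

Lemma perm_diag n (s t : 'rV[C]_n) (P V : 'M[C]_n) : P \in unitmx -> V \in unitmx ->
  invmx P *m diag_mx s *m P = invmx V *m diag_mx t *m V ->
  perm_eq [seq s 0 i | i <- index_enum 'I_n] [seq t 0 i | i <- index_enum 'I_n].
Proof.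
move=> Pu Vu E; apply: prod_XsubC_eq; rewrite !big_map.
have := congr1 char_poly E; rewrite !char_poly_sim // !char_poly_trig ?diag_mx_is_trig //.
move=> H; transitivity (\prod_(i < n) ('X - (diag_mx s i i)%:P)).
  by apply: eq_bigr => i _; rewrite mxE eqxx mulr1n.
by rewrite H; apply: eq_bigr => i _; rewrite mxE eqxx mulr1n.
Qed.

Lemma tC_diag n (V : 'M[C]_n) l :
  (V^t* *m diag_mx l *m V)^t* = V^t* *m diag_mx (map_mx Num.conj l) *m V.
Proof.
rewrite !trmx_mul !map_mxM trmxCK tr_diag_mx map_diag_mx mulmxA.
exact: erefl.
Qed.
Lemma sq_diag n (V : 'M[C]_n) (l : 'rV[C]_n) : V \is unitarymx ->
  (V^t* *m diag_mx l *m V)^t* *m (V^t* *m diag_mx l *m V) =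
  V^t* *m diag_mx (\row_i (`|l 0 i| ^+ 2)) *m V.
Proof.
move=> Vu; rewrite tC_diag.
rewrite !mulmxA.
rewrite (mulmxtVK (V^t* *m diag_mx (map_mx Num.conj l)) Vu).
rewrite -[V^t* *m _ *m diag_mx l]mulmxA mulmx_diag.
congr (_ *m diag_mx _ *m _).
by apply/rowP => i; rewrite !mxE normCKC.
Qed.

Lemma trnorm_diag n (A V : 'M[C]_n) l : V \is unitarymx ->
  A = V^t* *m diag_mx l *m V -> trnorm A = complex.Re (\sum_i `|l 0 i|).
Proof.
move=> Vu EA.
have HM : A^t* *m A = invmx V *m diag_mx (\row_i (`|l 0 i| ^+ 2)) *m V.
  rewrite (invmx_unitary Vu) EA; exact: sq_diag.
have Mn : A^t* *m A \is normalmx.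
  by apply/orthomx_spectral_subproof; exists (V, \row_i (`|l 0 i| ^+ 2)).
have /orthomx_spectralP EM := Mn.
rewrite /trnorm /absmx trace_sim ?spectral_unit // mxtrace_diag.
have := perm_diag (spectral_unit _) (unitarymx_unit Vu) (etrans (esym EM) HM).
move=> Hp.
transitivity (complex.Re (\sum_(x <- [seq spectral_diag (A ^t* *m A) 0 i | i <- index_enum 'I_n]) sqrtC x)).
  by rewrite big_map; f_equal; apply: eq_bigr => i _; rewrite mxE.
rewrite (perm_big _ Hp) big_map; f_equal; apply: eq_bigr => i _.
by rewrite mxE sqrCK.
Qed.

Lemma hermP n (A : 'M[C]_n) : A \is hermsymmx -> A^t* = A.
Proof. by move=> /is_hermitianmxP; rewrite expr0 scale1r => {2}->. Qed.

Lemma hermI n (A : 'M[C]_n) : A^t* = A -> A \is hermsymmx.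
Proof. by move=> h; apply/is_hermitianmxP; rewrite expr0 scale1r h. Qed.

Lemma conj_real (c : C) : c \is Num.real -> c^* = c.
Proof. by move=> /CrealP. Qed.

Lemma herm_comb n (A B : 'M[C]_n) (c t : C) : A \is hermsymmx -> B \is hermsymmx ->
  c \is Num.real -> t \is Num.real -> c *: (A - t *: B) \is hermsymmx.
Proof.
move=> hA hB hc ht; apply: hermI.
rewrite linearZ /= linearB /= linearZ /= map_mxZ map_mxB map_mxZ.
rewrite -[c in RHS](conj_real hc) -[t in RHS](conj_real ht).
by rewrite -[A in RHS](hermP hA) -[B in RHS](hermP hB).
Qed.

Lemma q_comb n v (A B : 'M[C]_n) (c t : C) :
  q v (c *: (A - t *: B)) = c * (q v A - t * q v B).
Proof.
rewrite /q -!scalemxAr -!scalemxAl mulmxBr mulmxBl -!scalemxAr -!scalemxAl.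
by rewrite !mxE.
Qed.

Lemma q1_row n (V : 'M[C]_n) j : V \is unitarymx -> q (row j V) 1%:M = 1.
Proof. by move=> Vu; rewrite -rowq mulmx1 (unitarymxP Vu) mxE eqxx. Qed.

Lemma q1_ge0 n (v : 'rV[C]_n) : 0 <= q v 1%:M.
Proof.
rewrite /q mulmx1 mxE; apply: sumr_ge0 => i _; rewrite !mxE.
by rewrite mul_conjC_ge0.
Qed.

Lemma q_lower n (U : 'M[C]_n) (l v : 'rV[C]_n) a : U \is unitarymx -> (forall i, a <= l 0 i) ->
  a * q v 1%:M <= q v (U^t* *m diag_mx l *m U).
Proof.
move=> Uu ha; rewrite q_diag -(nv_unitary v Uu) mulr_sumr; apply: ler_sum => i _.
by apply: ler_wpM2r => //; rewrite mul_conjC_ge0.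
Qed.

Lemma q_upper n (U : 'M[C]_n) (l v : 'rV[C]_n) b : U \is unitarymx -> (forall i, l 0 i <= b) ->
  q v (U^t* *m diag_mx l *m U) <= b * q v 1%:M.
Proof.
move=> Uu ha; rewrite q_diag -(nv_unitary v Uu) mulr_sumr; apply: ler_sum => i _.
by apply: ler_wpM2r => //; rewrite mul_conjC_ge0.
Qed.

Lemma herm_decomp n (A : 'M[C]_n) : A \is hermsymmx ->
  A = (spectralmx A)^t* *m diag_mx (spectral_diag A) *m spectralmx A.
Proof.
move=> hA; have /orthomx_spectralP {1}-> := hermitian_normalmx hA.
by rewrite invmx_unitary ?spectral_unitarymx.
Qed.


Lemma diag_props n (x U : 'M[C]_n) (l : 'rV[C]_n) : U \is unitarymx ->
  x = U^t* *m diag_mx l *m U -> (forall v, 0 <= q v x) -> \tr x = 1 ->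
  (forall i, 0 <= l 0 i) /\ \sum_i l 0 i = 1.
Proof.
move=> Uu Ex psd tr1; split.
  by move=> i; rewrite -(q_diag_row l i Uu) -Ex; exact: psd.
rewrite -tr1 (trace_unitary x Uu); apply: eq_bigr => i _.
by rewrite Ex q_diag_row.
Qed.

Lemma le1_sum n (l : 'I_n -> C) j : (forall i, 0 <= l i) -> \sum_i l i = 1 -> l j <= 1.
Proof.
move=> h0 h1; rewrite -h1 (bigD1 j) //= lerDl; exact: sumr_ge0.
Qed.

Lemma density_of_diag n (U : 'M[C]_n) (l : 'rV[C]_n) : U \is unitarymx ->
  (forall i, 0 <= l 0 i) -> \sum_i l 0 i = 1 -> density (U^t* *m diag_mx l *m U).
Proof.
move=> Uu h0 h1; split; [|split].
- apply: hermI; rewrite tC_diag; congr (_ *m diag_mx _ *m _).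
  by apply/rowP => i; rewrite mxE conj_real // ger0_real.
- move=> v; rewrite -/(q v _) q_diag; apply: sumr_ge0 => i _.
  by apply: mulr_ge0 => //; rewrite mul_conjC_ge0.
- rewrite mxtrace_mulC mulmxA (unitarymxP Uu) mul1mx mxtrace_diag.
  exact: h1.
Qed.

Lemma density_decomp n (x : 'M[C]_n) : density x -> exists (U : 'M[C]_n) (l : 'rV[C]_n),
  [/\ U \is unitarymx, x = U^t* *m diag_mx l *m U,
      (forall i, 0 <= l 0 i) & \sum_i l 0 i = 1].
Proof.
move=> [hx [psd tr1]]; exists (spectralmx x), (spectral_diag x).
have Uu := spectral_unitarymx x; have E := herm_decomp hx.
by have [h0 h1] := diag_props Uu E psd tr1; split.
Qed.


Lemma qB n v (A B : 'M[C]_n) : q v (A - B) = q v A - q v B.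
Proof. by rewrite /q mulmxBr mulmxBl !mxE. Qed.

Lemma ReC (z : C) : 0 <= z -> z = ((complex.Re z)%:C)%C.
Proof. by move=> h; rewrite RRe_real // ger0_real. Qed.

Lemma normCR (a : R) : `|(a%:C)%C| = (`|a|%:C)%C.
Proof. by rewrite normc_def /= expr0n /= addr0 sqrtr_sqr. Qed.

Lemma sumCR n (f : 'I_n -> R) : \sum_i ((f i)%:C)%C = ((\sum_i f i)%:C)%C.
Proof. by rewrite rmorph_sum. Qed.

Lemma sup_eq_max (E : set R) x : E x -> ubound E x -> sup E = x.
Proof.
move=> Ex ub; apply/le_anti/andP; split; first by apply: ge_sup => //; exists x.
by apply: (ub_le_sup (ex_intro _ x ub)).
Qed.

Lemma inf_eq_min (E : set R) x : E x -> lbound E x -> inf E = x.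
Proof.
move=> Ex lb; apply/le_anti/andP; split; last by apply: lb_le_inf => //; exists x.
by apply: (ge_inf (ex_intro _ x lb)).
Qed.

End S.
Lemma scal (R : realType) n (r x : 'I_n.+1 -> R) (m : R) :
  (forall j, 0 <= x j) -> (forall j, m <= r j) -> 0 <= m ->
  \sum_j r j = 1 -> \sum_j x j = 1 -> \sum_j `|r j - x j| <= 2 * (1 - m).
Proof.
move=> hx hr hm sr sx.
have [j0 hj0] : exists j0, r j0 <= x j0.
  have [/existsP[j0 hj0]|] := boolP [exists j, r j <= x j]; first by exists j0.
  rewrite negb_exists => /forallP h.
  have : \sum_j x j < \sum_j r j.
    rewrite [X in X < _](bigD1 ord0) // [X in _ < X](bigD1 ord0) //=.
    apply: ltr_leD; first by rewrite ltNge h.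
    by apply: ler_sum => j _; rewrite ltW // ltNge h.
  by rewrite sr sx ltxx.
pose f j := Order.max (r j - x j) 0.
have E j : `|r j - x j| = 2 * f j - (r j - x j).
  rewrite /f; have [h|h] := leP 0 (r j - x j).
    by rewrite ger0_norm //; lra.
  by rewrite ltr0_norm //; lra.
have -> : \sum_j `|r j - x j| = 2 * \sum_j f j.
  under eq_bigr do rewrite E.
  by rewrite sumrB -mulr_sumr sumrB sr sx subrr subr0.
have f0 : f j0 = 0 by rewrite /f; apply/max_idPr; lra.
have fr j : f j <= r j.
  by rewrite /f ge_max; apply/andP; split; [have := hx j; lra | have := hr j; lra].
have : \sum_j f j <= 1 - r j0.
  have -> : 1 - r j0 = \sum_(j | j != j0) r j.
    by rewrite -sr (bigD1 j0) //= addrAC subrr add0r.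
  rewrite (bigD1 j0) //= f0 add0r.
  by apply: ler_sum => j _; exact: fr.
have := hr j0; lra.
Qed.

Local Open Scope classical_set_scope.

Theorem proposition7 (R : realType) (d : nat) (rho : 'M[R[i]]_d) :
  density rho ->
  sup [set trnorm (rho - xi) | xi in [set xi | density xi]]
  = 2 * (1 - boundariness rho).
Proof.
move=> Hrho.
case: d rho Hrho => [|n] rho Hrho.
  exfalso; case: Hrho => _ [_]; rewrite /mxtrace big_ord0 => /eqP.
  by rewrite eq_sym oner_eq0.
have [U [mu [Uu Erho mu0 mu1]]] := density_decomp Hrho.
have [k _ Hk] := @arg_minP _ _ _ ord0 predT (fun i => complex.Re (mu 0 i)) isT.
set m := complex.Re (mu 0 k).
have Em : (m%:C)%C = mu 0 k by rewrite -ReC.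
have Hmle i : (m%:C)%C <= mu 0 i.
  by rewrite [X in _ <= X](ReC (mu0 i)) lecR; exact: Hk.
have Hm0 : 0 <= m by rewrite -ler0c Em.
have Hm1 : m <= 1.
  have := le1_sum k mu0 mu1; rewrite -Em.
  by rewrite -[X in _ <= X -> _]/((1%:C)%C) lecR.
have hrhoH : rho \is hermsymmx by case: Hrho.
have tR (t : R) : (t%:C)%C \is Num.real by apply/complex_realP; exists t.
have one_sub (t : R) : t < 1 -> 1 - (t%:C)%C != 0.
  move=> ht; rewrite subr_eq0; apply/eqP => /(congr1 (@complex.Re R)) /= h.
  by move: ht; rewrite -h ltxx.
have cpos (t : R) : t < 1 -> 0 < (1 - (t%:C)%C)^-1.
  move=> ht; rewrite invr_gt0 subr_gt0 -[X in _ < X]/((1%:C)%C) ltcR //.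
have inS x t : density x -> 0 <= t -> t < 1 -> t <= m ->
    0 <= t < 1 /\ density ((1 - (t%:C)%C)^-1 *: (rho - (t%:C)%C *: x)).
  move=> Hx ht0 ht1 htm; split; first by rewrite ht0 ht1.
  have [V [l [Vu Ex l0 l1]]] := density_decomp Hx.
  have hxH : x \is hermsymmx by case: Hx.
  split; [|split].
  - by apply: herm_comb => //; rewrite rpredV rpredB ?rpred1.
  - move=> v; rewrite -/(q v _) q_comb; apply: mulr_ge0; first exact: ltW (cpos _ ht1).
    have h1 := q_lower v Uu Hmle; rewrite -Erho in h1.
    have h2 : q v x <= 1 * q v 1%:M.
      by rewrite Ex; apply: q_upper => // i; apply: (le1_sum i l0 l1).
    have hq := q1_ge0 v.
    rewrite subr_ge0; apply: le_trans h1.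
    apply: (@le_trans _ _ ((t%:C)%C * (1 * q v 1%:M))).
      by apply: ler_wpM2l => //; rewrite ler0c.
    by rewrite mul1r; apply: ler_wpM2r => //; rewrite lecR.
  - rewrite mxtraceZ linearB /= mxtraceZ.
    case: Hrho => _ [_ ->]; case: Hx => _ [_ ->].
    by rewrite mulr1 mulVf // one_sub.
have Wlb x : density x -> m <= weight rho x.
  move=> Hx; rewrite /weight.
  set S := (X in sup X).
  have ubS : ubound S 1 by move=> t [/andP[_ /ltW]].
  have hS : has_ubound S by exists 1.
  have S0 : S 0 by apply: inS => //; lra.
  have s0 : 0 <= sup S by apply: ub_le_sup.
  rewrite leNgt; apply/negP => hlt.
  have : S ((sup S + m) / 2) by apply: inS => //; lra.
  move=> /(ub_le_sup hS); lra.
pose x0 := U^t* *m diag_mx (delta_mx 0 k) *m U.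
have d0 i : 0 <= (delta_mx 0 k : 'rV[R[i]]_n.+1) 0 i by rewrite mxE ler0n.
have d1 : \sum_i (delta_mx 0 k : 'rV[R[i]]_n.+1) 0 i = 1.
  rewrite (bigD1 k) //= big1 ?addr0; first by rewrite mxE !eqxx.
  by move=> i hi; rewrite mxE eqxx /=; case: eqP hi => // ->; rewrite eqxx.
have Hx0 : density x0 by apply: density_of_diag.
have Wub : weight rho x0 <= m.
  rewrite /weight; apply: ge_sup.
    by exists 0; apply: inS => //; lra.
  move=> t [/andP[ht0 ht1] [_ [psd _]]].
  have := psd (row k U); rewrite -/(q _ _) q_comb Erho /x0 !q_diag_row //.
  rewrite pmulr_rge0 ?cpos // mxE !eqxx mulr1 subr_ge0 -Em lecR //.
have Hb : boundariness rho = m.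
  rewrite /boundariness; apply: inf_eq_min.
    by exists x0 => //; apply/le_anti; rewrite Wub Wlb.
  by move=> y [x Hx <-]; apply: Wlb.
rewrite Hb; apply: sup_eq_max.
  exists x0 => //.
  have E : rho - x0 = U^t* *m diag_mx (mu - delta_mx 0 k) *m U.
    rewrite Erho /x0 -mulmxBl -mulmxBr; congr (_ *m _ *m _).
    by apply/matrixP => i j; rewrite !mxE mulrnBl.
  rewrite E (trnorm_diag Uu (erefl _)).
  have -> : \sum_i `|(mu - delta_mx 0 k) 0 i| = (1 - mu 0 k) + (1 - mu 0 k).
    rewrite (bigD1 k) //=; congr (_ + _).
      rewrite !mxE !eqxx /= ler0_norm ?opprB // subr_le0.
      exact: (le1_sum k mu0 mu1).
    have -> : 1 - mu 0 k = \sum_(i | i != k) mu 0 i.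
      by rewrite -mu1 (bigD1 k) //= addrAC subrr add0r.
    apply: eq_bigr => i hi; rewrite !mxE eqxx /=.
    rewrite (negbTE hi).
    by rewrite subr0 ger0_norm.
  rewrite -Em -[1]/((1%:C)%C) -!rmorphB -rmorphD /=; lra.
move=> y [xi Hxi <-].
have hxiH : xi \is hermsymmx by case: Hxi.
have hA : rho - xi \is hermsymmx.
  by have := herm_comb hrhoH hxiH (real1 _) (real1 _); rewrite !scale1r.
have Vu := spectral_unitarymx (rho - xi).
have EA := herm_decomp hA.
move: Vu EA; set V := spectralmx _; set l := spectral_diag _ => Vu EA.
rewrite (trnorm_diag Vu EA).
pose r i := q (row i V) rho; pose x i := q (row i V) xi.
have hl i : l 0 i = r i - x i by rewrite -(q_diag_row l i Vu) -EA qB.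
have hr i : 0 <= r i by case: Hrho => _ [+ _]; apply.
have hx i : 0 <= x i by case: Hxi => _ [+ _]; apply.
have hrm i : (m%:C)%C <= r i.
  by have := q_lower (row i V) Uu Hmle; rewrite q1_row // mulr1 -Erho.
have sr : \sum_i r i = 1 by rewrite /r -(trace_unitary rho Vu); case: Hrho => _ [_ ->].
have sx : \sum_i x i = 1 by rewrite /x -(trace_unitary xi Vu); case: Hxi => _ [_ ->].
have pt i : `|l 0 i| = ((`|complex.Re (r i) - complex.Re (x i)|)%:C)%C.
  by rewrite hl {1}(ReC (hr i)) {1}(ReC (hx i)) -rmorphB normCR.
under eq_bigr do rewrite pt.
rewrite sumCR /=.
apply: scal => //.
- by move=> j; rewrite -ler0c -(ReC (hx j)).
- by move=> j; rewrite -lecR -(ReC (hr j)).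
- move: sr; under eq_bigr do rewrite (ReC (hr _)).
  by rewrite sumCR => /(congr1 (@complex.Re R)).
- move: sx; under eq_bigr do rewrite (ReC (hx _)).
  by rewrite sumCR => /(congr1 (@complex.Re R)).
Qed.
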